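(* For every $n\in\mathbb{N}$ there exists a constant $K_n$, depending only on $n$, with the following property. Let $K$ be a multicomplex and let $\Gamma$ be a group acting on $K$ by simplicial automorphisms such that every element of $\Gamma$ is simplicially homotopic to the identity of $K$. Let $c\in C_n(K)$ be a simplicial cycle and let $\mu$ be a probability measure on $\Gamma$ with finite support. Then there exists $b\in C_{n+1}(K)$ such that $(\mu*c)-c=\partial b$ and $\|b\|_1\leq K_n\|c\|_1$.
   Context: A multicomplex is a regular unordered $\Delta$-complex: a $\Delta$-complex in which each simplex has distinct vertices which are unordered, and the intersection of any two simplices is a subcomplex of each (distinct simplices may share the same vertex set). An algebraic $n$-simplex of $K$ is a pair $\sigma=(\Delta,(v_0,\dots,v_n))$ where $\Delta$ is a simplex of $K$ and $\{v_0,\dots,v_n\}$ equals the vertex set of $\Delta$ (repetitions allowed); its $i$-th face is $(\Delta',(v_0,\dots,\widehat{v_i},\dots,v_n))$, where $\Delta'=\Delta$ if the vertex set does not change and otherwise $\Delta'$ is the face of $\Delta$ spanned by the remaining vertices. $C_n(K)$ is the real vector space with basis the algebraic $n$-simplices, with boundary $\partial=\sum_i(-1)^i\partial^i$ and $\ell^1$-norm $\|\sum a_\sigma\sigma\|_1=\sum|a_\sigma|$. Simplicial automorphisms act on algebraic simplices, hence linearly on $C_n(K)$. For a finitely supported probability measure $\mu$ on $\Gamma$, the diffusion of $c\in C_n(K)$ is $\mu*c=\sum_{\gamma\in\Gamma}\mu(\gamma)\,(\gamma\cdot c)$. A simplicial map $f\colon K\to K$ is simplicially homotopic to the identity if there is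 a simplicial map $F\colon K\times[0,1]\to K$ (from the product multicomplex) with $F\circ i_0=f$ and $F\circ i_1=\mathrm{id}_K$, where $i_j\colon K\to K\times\{j\}$ are the inclusions. *)

(* Defs.v *)
From HB Require Import structures.
From mathcomp Require Import all_boot all_order all_algebra.
From mathcomp Require Import finmap.
From mathcomp Require Import freeg.
From mathcomp Require Import reals.
From Stdlib Require List.

Set Implicit Arguments.
Unset Strict Implicit.
Unset Printing Implicit Defensive.

Import Order.TTheory GRing.Theory Num.Theory.
Local Open Scope ring_scope.
Local Open Scope fset_scope.

(* Combinatorial data of a (regular, unordered) Delta-complex:         *)
(* a type of vertices, a type of simplices, the vertex set of each     *)
(* simplex, and the face of a simplex spanned by a set W of its        *)
(* vertices (the value of [face s W] is irrelevant unless W is a       *)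
(* nonempty subset of [vset s]).                                        *)
Record mcdata := MCData {
  mc_V : choiceType;
  mc_S : choiceType;
  vset : mc_S -> {fset mc_V};
  face : mc_S -> {fset mc_V} -> mc_S
}.

(* Gluing is along faces, matching vertices (unordered vertices), so the
   intersection of two simplices is the union of their common faces, which
   is a subcomplex of each. *)
Definition is_multicomplex (K : mcdata) : Prop :=
  (forall s : mc_S K, vset s != fset0) /\
  (forall (s : mc_S K) W, W `<=` vset s -> W != fset0 -> vset (face s W) = W) /\
  (forall s : mc_S K, face s (vset s) = s) /\
  (forall (s : mc_S K) W W', W' `<=` W -> W `<=` vset s -> W' != fset0 ->
      face (face s W) W' = face s W') /\
  (forall (v : mc_V K), exists s, vset s = [fset v]) /\
  (forall s t (v : mc_V K), vset s = [fset v] -> vset t = [fset v] -> s = t).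

Definition is_smap (K L : mcdata) (fv : mc_V K -> mc_V L)
    (fs : mc_S K -> mc_S L) : Prop :=
  (forall s, vset (fs s) = [fset fv x | x in vset s]) /\
  (forall s W, W `<=` vset s -> W != fset0 ->
     fs (face s W) = face (fs s) [fset fv x | x in W]).

Definition is_sautom (K : mcdata) (fv : mc_V K -> mc_V K)
    (fs : mc_S K -> mc_S K) : Prop :=
  is_smap fv fs /\
  exists (gv : mc_V K -> mc_V K) (gs : mc_S K -> mc_S K),
    [/\ is_smap gv gs, cancel fv gv, cancel gv fv, cancel fs gs & cancel gs fs].

Definition is_saction (K : mcdata) (G : groupType)
    (av : G -> mc_V K -> mc_V K) (as_ : G -> mc_S K -> mc_S K) : Prop :=
  [/\ (forall g, is_sautom (av g) (as_ g)),
      av 1%g =1 id, as_ 1%g =1 id,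
      (forall g h, av (g * h)%g =1 av g \o av h) &
      (forall g h, as_ (g * h)%g =1 as_ g \o as_ h)].

(* The product multicomplex K x [0,1].  [0,1] is the standard 1-simplex
   with vertices 0 (= false) and 1 (= true).  A simplex of the product
   K x L is a triple (sigma, tau, S) with S a set of vertices of
   V(sigma) x V(tau) projecting onto V(sigma) and V(tau) and forming a
   chain for the product order of some total orders on V(sigma), V(tau).
   For L = [0,1], writing S = A x {0} u B x {1}, this means exactly
   A u B = V(sigma) and #|A n B| <= 1 (tau is determined by which of A, B
   are nonempty). *)
Section Prism.
Variable K : mcdata.

Definition prism_ok (x : mc_S K * {fset mc_V K} * {fset mc_V K}) : bool :=
  (x.1.2 `|` x.2 == vset x.1.1) && (#|` x.1.2 `&` x.2| <= 1)%N.

Definition prism_simp : choiceType :=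
  [the choiceType of {x : mc_S K * {fset mc_V K} * {fset mc_V K} | prism_ok x}].

Definition prism_vset (x : prism_simp) : {fset (mc_V K * bool)} :=
  [fset (v, false) | v in (val x).1.2] `|` [fset (v, true) | v in (val x).2].

Definition prism_face (x : prism_simp) (W : {fset (mc_V K * bool)}) :
    prism_simp :=
  let A := [fset p.1 | p in W & ~~ p.2] in
  let B := [fset p.1 | p in W & p.2] in
  insubd x (face (val x).1.1 (A `|` B), A, B).

Definition prism : mcdata :=
  @MCData [the choiceType of (mc_V K * bool)%type] prism_simp
          prism_vset prism_face.

Lemma prism_ok0 (s : mc_S K) : prism_ok (s, vset s, fset0).
Proof. by rewrite /prism_ok /= fsetU0 fsetI0 cardfs0 eqxx. Qed.

Lemma prism_ok1 (s : mc_S K) : prism_ok (s, fset0, vset s).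
Proof. by rewrite /prism_ok /= fset0U fset0I cardfs0 eqxx. Qed.

Definition incl_v (j : bool) (v : mc_V K) : mc_V prism := (v, j).
Definition incl_s (j : bool) (s : mc_S K) : mc_S prism :=
  if j then exist _ (s, fset0, vset s) (prism_ok1 s)
  else exist _ (s, vset s, fset0) (prism_ok0 s).

End Prism.

Definition simp_homotopic_to_id (K : mcdata) (fv : mc_V K -> mc_V K)
    (fs : mc_S K -> mc_S K) : Prop :=
  exists (Fv : mc_V (prism K) -> mc_V K) (Fs : mc_S (prism K) -> mc_S K),
    [/\ is_smap Fv Fs,
        Fv \o incl_v false =1 fv, Fs \o incl_s false =1 fs,
        Fv \o incl_v true =1 id & Fs \o incl_s true =1 id].

(* A chain is a finite formal R-linear combination of pairs
   (Delta, (v_0,...,v_k)); C_n(K) consists of the chains supported on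
   algebraic n-simplices, i.e. pairs with k = n and {v_0..v_n} = V(Delta). *)
Section Chains.
Variables (K : mcdata) (R : realType).

Definition asimp : choiceType :=
  [the choiceType of (mc_S K * seq (mc_V K))%type].

Definition is_asimp (n : nat) (sg : asimp) : bool :=
  (size sg.2 == n.+1) && ([fset x | x in sg.2] == vset sg.1).

Definition chain := {freeg asimp / R}.

Definition is_chain (n : nat) (c : chain) : bool := all (is_asimp n) (dom c).

Definition gen (sg : asimp) : chain := Freeg [:: (1, sg)].

Definition aface (i : nat) (sg : asimp) : asimp :=
  let vs := take i sg.2 ++ drop i.+1 sg.2 in
  let W := [fset x | x in vs] in
  (if W == vset sg.1 then sg.1 else face sg.1 W, vs).

Definition bd_simp (sg : asimp) : chain :=
  if (size sg.2 <= 1)%N then 0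
  else \sum_(i < size sg.2) (-1) ^+ i *: gen (aface i sg).

Definition bd (c : chain) : chain := fglift bd_simp c.

Definition l1norm (c : chain) : R := \sum_(k <- dom c) `|coeff k c|.

Definition chain_map (fv : mc_V K -> mc_V K) (fs : mc_S K -> mc_S K)
    (c : chain) : chain :=
  fglift (fun sg : asimp => gen (fs sg.1, map fv sg.2)) c.

Definition fin_prob (G : Type) (mu : G -> R) (s : seq G) : Prop :=
  [/\ List.NoDup s, (forall g, ~ List.In g s -> mu g = 0), (forall g, 0 <= mu g)
    & \sum_(g <- s) mu g = 1].

Definition diffusion (G : Type) (av : G -> mc_V K -> mc_V K)
    (as_ : G -> mc_S K -> mc_S K) (mu : G -> R) (s : seq G) (c : chain) :
    chain :=
  \sum_(g <- s) mu g *: chain_map (av g) (as_ g) c.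

End Chains.

(* Main.v *)
Require Import Defs.
From HB Require Import structures.
From mathcomp Require Import all_boot all_order all_algebra.
From mathcomp Require Import finmap freeg reals.
From mathcomp Require Import zify.
Set Implicit Arguments.
Unset Strict Implicit.
Unset Printing Implicit Defensive.
Import Order.TTheory GRing.Theory Num.Theory.
Local Open Scope ring_scope.

Lemma subrACA' (M : zmodType) (a b c d : M) : (a - b) - (c - d) = (a - c) - (b - d).
Proof. by rewrite !opprB !addrA addrAC [in RHS]addrAC [a - b - c]addrAC. Qed.

Lemma prism_alg (M : zmodType) (A B C Q P1 D2 : M) : C - (A - Q) - (P1 - (A - B - D2)) + (P1 - (Q - D2)) = C - B.
Proof.
rewrite !opprB !addrA subrK. rewrite -!addrA; congr (_ + _).
rewrite [D2 - Q]addrC !addrA subrK addrAC subrK addrAC subrr add0r. done.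
Qed.

Section Comb.
Variables (T : Type) (M : zmodType).

Fixpoint Pr (io : seq T -> M) (u v : seq T) : M :=
  match u, v with
  | a :: u', b :: v' => io (a :: b :: v') - Pr (fun x => io (a :: x)) u' v'
  | _, _ => 0
  end.

Fixpoint Dd (io : seq T -> M) (x : seq T) : M :=
  match x with
  | [::] => 0
  | a :: x' => io x' - Dd (fun y => io (a :: y)) x'
  end.

Lemma Pr_ind (P : M -> Prop) (X : pred T) :
  P 0 -> (forall a b, P a -> P b -> P (a - b)) ->
  forall u v io, size u = size v -> all X u -> all X v ->
  (forall y, size y = (size u).+1 -> all X y -> P (io y)) -> P (Pr io u v).
Proof.
move=> P0 PB; elim=> [|a u IH] [|b v] io //= [Es] /andP[Xa Xu] /andP[Xb Xv] Hy.
apply: PB; first by apply: Hy => //=; [rewrite Es | rewrite Xa Xb Xv].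
apply: IH => // y Sy Xy; apply: Hy => /=; first by rewrite Sy.
by rewrite Xa.
Qed.

Lemma Dd_ind (P : M -> Prop) (X : pred T) :
  P 0 -> (forall a b, P a -> P b -> P (a - b)) ->
  forall x io, all X x ->
  (forall y, (size y).+1 = size x -> all X y -> P (io y)) -> P (Dd io x).
Proof.
move=> P0 PB; elim=> [|a x IH] io //= /andP[Xa Xx] Hy.
apply: PB; first by apply: Hy.
apply: IH => // y Sy Xy; apply: Hy => /=; first by rewrite Sy.
by rewrite Xa.
Qed.

Lemma Pr_B (al be : seq T -> M) u v :
  Pr (fun y => al y - be y) u v = Pr al u v - Pr be u v.
Proof.
elim: u v al be => [|a u IH] [|b v] al be /=; rewrite ?subr0 //.
rewrite (IH v (fun x => al (a :: x)) (fun x => be (a :: x))).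
by rewrite subrACA'. 
Qed.

Lemma Pr_ext (al be : seq T -> M) u v :
  (forall y, al y = be y) -> Pr al u v = Pr be u v.
Proof.
elim: u v al be => [|a u IH] [|b v] al be //= E.
by rewrite E (IH v _ (fun x => be (a :: x))).
Qed.

Lemma Dd_B (al be : seq T -> M) x :
  Dd (fun y => al y - be y) x = Dd al x - Dd be x.
Proof.
elim: x al be => [|a x IH] al be /=; rewrite ?subr0 //.
rewrite (IH (fun y => al (a :: y)) (fun y => be (a :: y))).
by rewrite subrACA'.
Qed.

Lemma Dd_ext (al be : seq T -> M) x :
  (forall y, al y = be y) -> Dd al x = Dd be x.
Proof.
elim: x al be => [|a x IH] al be //= E.
by rewrite E (IH _ (fun y => be (a :: y))).
Qed.

Lemma Dd_map (f : T -> T) (k : seq T -> M) x :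
  Dd (fun y => k (map f y)) x = Dd k (map f x).
Proof.
elim: x k => [|a x IH] k //=.
by rewrite (IH (fun y => k (f a :: y))).
Qed.

Lemma prism_identity (f' f : T -> T) io w :
  Pr (Dd io) (map f' w) (map f w)
  + Dd (fun x => Pr io (map f' x) (map f x)) w = io (map f w) - io (map f' w).
Proof.
elim: w io => [|x w IH] io /=; first by rewrite subrr addr0.
set a := f' x; set b := f x.
have E1 : Pr (fun y => Dd io (a :: y)) (map f' w) (map f w) =
          Pr io (map f' w) (map f w) - Pr (Dd (fun y => io (a :: y))) (map f' w) (map f w).
  by rewrite -Pr_B.
have E2 : Dd (fun y => Pr io (a :: map f' y) (b :: map f y)) w =
   Dd (fun y => io (a :: b :: y)) (map f w)
   - Dd (fun y => Pr (fun z => io (a :: z)) (map f' y) (map f y)) w.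
  by rewrite -Dd_map -Dd_B.
rewrite /= in E2.
rewrite E1 E2.
have := IH (fun z => io (a :: z)).
move=> IHa.
set P1 := Pr io _ _; set P2 := Pr (Dd _) _ _; set D1 := Dd _ (map f w); set D2 := Dd _ w.
have -> : P2 = io (a :: map f w) - io (a :: map f' w) - D2 by rewrite -IHa addrK.
rewrite /D1.
set Q := Dd (fun y => io [:: a, b & y]) (map f w).
set A := io (a :: map f w); set B := io (a :: map f' w); set C := io (b :: map f w).
exact: prism_alg.
Qed.
End Comb.

Section Comb2.
Variables (T : Type) (M M' : zmodType).

Lemma Pr_morph (L : M -> M') (io : seq T -> M) u v :
  (forall x y, L (x - y) = L x - L y) ->
  L (Pr io u v) = Pr (fun y => L (io y)) u v.
Proof.
move=> LB; have L0 : L 0 = 0 by rewrite -(subrr 0) LB subrr.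
elim: u v io => [|a u IH] [|b v] io //=.
by rewrite LB (IH v (fun x => io (a :: x))).
Qed.

Lemma Dd_morph (L : M -> M') (io : seq T -> M) x :
  (forall x y, L (x - y) = L x - L y) ->
  L (Dd io x) = Dd (fun y => L (io y)) x.
Proof.
move=> LB; have L0 : L 0 = 0 by rewrite -(subrr 0) LB subrr.
elim: x io => [|a x IH] io //=.
by rewrite LB (IH (fun y => io (a :: y))).
Qed.

Lemma Pr_eq_in (X : pred T) u v (al be : seq T -> M) :
  size u = size v -> all X u -> all X v ->
  (forall y, size y = (size u).+1 -> all X y -> al y = be y) ->
  Pr al u v = Pr be u v.
Proof.
move=> Su Xu Xv E; apply/eqP; rewrite -subr_eq0 -Pr_B; apply/eqP.
apply: (@Pr_ind _ _ (fun z => z = 0) X) => //.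
  by move=> ? ? -> ->; rewrite subr0.
by move=> y Sy Xy; rewrite E // subrr.
Qed.

Lemma Dd_eq_in (X : pred T) x (al be : seq T -> M) :
  all X x ->
  (forall y, (size y).+1 = size x -> all X y -> al y = be y) ->
  Dd al x = Dd be x.
Proof.
move=> Xx E; apply/eqP; rewrite -subr_eq0 -Dd_B; apply/eqP.
apply: (@Dd_ind _ _ (fun z => z = 0) X) => //.
  by move=> ? ? -> ->; rewrite subr0.
by move=> y Sy Xy; rewrite E // subrr.
Qed.

Lemma Pr_norm (R : numDomainType) (nr : M -> R) (X : pred T) u v io :
  nr 0 = 0 -> (forall a b, nr (a - b) <= nr a + nr b) ->
  size u = size v -> all X u -> all X v ->
  (forall y, size y = (size u).+1 -> all X y -> nr (io y) <= 1) ->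
  nr (Pr io u v) <= (size u)%:R.
Proof.
move=> n0 nB; elim: u v io => [|a u IH] [|b v] io //=; rewrite ?n0 //.
move=> [Es] /andP[Xa Xu] /andP[Xb Xv] Hy.
apply: le_trans (nB _ _) _; rewrite -add1n natrD lerD //.
  by apply: Hy => //=; [rewrite Es | rewrite Xa Xb Xv].
apply: IH => // y Sy Xy; apply: Hy => /=; first by rewrite Sy.
by rewrite Xa.
Qed.

End Comb2.

Section Comb3.
Variables (T : Type) (R : ringType) (M : lmodType R).

Lemma Dd_sum (io : seq T -> M) x :
  Dd io x = \sum_(i < size x) (-1) ^+ i *: io (take i x ++ drop i.+1 x).
Proof.
elim: x io => [|a x IH] io /=; first by rewrite big_ord0.
rewrite big_ord_recl /= expr0 scale1r drop0 IH; congr (_ + _).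
rewrite -sumrN; apply: eq_bigr => i _.
by rewrite exprS mulN1r scaleNr.
Qed.

End Comb3.


HB.instance Definition _ (R : ringType) (K : choiceType) (M : lmodType R) (f : K -> M) :=
  GRing.isAdditive.Build {freeg K / R} M (fglift f) (lift_is_additive f).

Section FG.
Variables (R : realType) (K : choiceType).
Local Notation ch := {freeg K / R}.

Lemma big_dom_sub (M : zmodType) (D : ch) (F : K -> M) (s : seq K) :
  uniq s -> {subset dom D <= s} -> (forall z, coeff z D = 0 -> F z = 0) ->
  \sum_(z <- dom D) F z = \sum_(z <- s) F z.
Proof.
move=> us sub F0.
rewrite [RHS](bigID (fun z => z \in dom D)) /=.
rewrite [X in _ = _ + X]big1_seq ?addr0; last first.
  by move=> z /andP[zn _]; apply: F0; apply: coeff_outdom.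
rewrite -[RHS]big_filter; apply: perm_big.
apply: uniq_perm; [exact: uniq_dom | exact: filter_uniq |].
by move=> z; rewrite mem_filter; case: (boolP (z \in dom D)) => // /sub ->.
Qed.

Lemma fgliftE (M : lmodType R) (f : K -> M) (D : ch) :
  fglift f D = \sum_(z <- dom D) coeff z D *: f z.
Proof.
rewrite -{1}[D]freeg_sumE raddf_sum; apply: eq_bigr => z _.
exact: liftU.
Qed.

Lemma fglift_sub (M : lmodType R) (f : K -> M) (D : ch) s :
  uniq s -> {subset dom D <= s} ->
  fglift f D = \sum_(z <- s) coeff z D *: f z.
Proof.
move=> us sub; rewrite fgliftE; apply: big_dom_sub => // z ->.
by rewrite scale0r.
Qed.

Lemma fgliftZ (M : lmodType R) (f : K -> M) k (D : ch) :
  fglift f (k *: D) = k *: fglift f D.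
Proof.
rewrite (fglift_sub _ (uniq_dom D) (@domZ_subset _ _ k D)) fgliftE.
rewrite scaler_sumr; apply: eq_bigr => z _; by rewrite coeffZ scalerA.
Qed.

Lemma fglift0 (M : lmodType R) (f : K -> M) : fglift f (0 : ch) = 0.
Proof. exact: raddf0. Qed.

Lemma fgliftB (M : lmodType R) (f : K -> M) (x y : ch) :
  fglift f (x - y) = fglift f x - fglift f y.
Proof. exact: raddfB. Qed.

Lemma fgliftD (M : lmodType R) (f : K -> M) (x y : ch) :
  fglift f (x + y) = fglift f x + fglift f y.
Proof. exact: raddfD. Qed.

Lemma fglift_ext (M : lmodType R) (f g : K -> M) (D : ch) :
  {in dom D, f =1 g} -> fglift f D = fglift g D.
Proof.
by move=> E; rewrite !fgliftE; apply: eq_big_seq => z /E ->.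
Qed.

Lemma scale_gen k (z : K) : k *: << z >> = << k *g z >> :> ch.
Proof.
apply/eqP/freeg_eqP => x; rewrite coeffZ !coeffU. by rewrite mul1r.
Qed.

Lemma fglift_gen (D : ch) : fglift (fun z => << z >>) D = D.
Proof.
rewrite fgliftE -[RHS]freeg_sumE; apply: eq_bigr => z _.
exact: scale_gen.
Qed.

Lemma fglift_comp (f g : K -> ch) (D : ch) :
  fglift g (fglift f D) = fglift (fun z => fglift g (f z)) D.
Proof.
rewrite [fglift f D]fgliftE raddf_sum fgliftE; apply: eq_bigr => z _.
exact: fgliftZ.
Qed.

Lemma fglift_funB (M : lmodType R) (f g : K -> M) (D : ch) :
  fglift (fun z => f z - g z) D = fglift f D - fglift g D.
Proof.
rewrite !fgliftE -sumrB; apply: eq_bigr => z _; by rewrite scalerBr.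
Qed.

Lemma fglift_funsum (M : lmodType R) (m : nat) (F : nat -> K -> M) (D : ch) :
  fglift (fun z => \sum_(j < m) F j z) D = \sum_(j < m) fglift (F j) D.
Proof.
rewrite fgliftE; under eq_bigr do rewrite scaler_sumr.
rewrite exchange_big /=; apply: eq_bigr => j _; by rewrite fgliftE.
Qed.

Definition nrm (D : ch) : R := \sum_(z <- dom D) `|coeff z D|.

Lemma nrm_sub (D : ch) s : uniq s -> {subset dom D <= s} ->
  nrm D = \sum_(z <- s) `|coeff z D|.
Proof. by move=> us sub; apply: big_dom_sub => // z ->; rewrite normr0. Qed.

Lemma nrm_ge0 (D : ch) : 0 <= nrm D.
Proof. by apply: sumr_ge0 => z _. Qed.

Lemma nrm0 : nrm 0 = 0.
Proof. by rewrite /nrm dom0 big_nil. Qed.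

Lemma nrmD (x y : ch) : nrm (x + y) <= nrm x + nrm y.
Proof.
have us := undup_uniq (dom x ++ dom y).
rewrite (nrm_sub us); last by move=> z /domD_subset; rewrite mem_undup.
rewrite (nrm_sub (D:=x) us); last first.
  by move=> z zx; rewrite mem_undup mem_cat zx.
rewrite (nrm_sub (D:=y) us); last first.
  by move=> z zy; rewrite mem_undup mem_cat zy orbT.
rewrite -big_split /=; apply: ler_sum => z _; by rewrite coeffD ler_normD.
Qed.

Lemma nrmN (x : ch) : nrm (- x) = nrm x.
Proof.
rewrite (nrm_sub (D:=-x) (uniq_dom x)); last by move=> z; rewrite domN.
by apply: eq_bigr => z _; rewrite coeffN normrN.
Qed.

Lemma nrmB (x y : ch) : nrm (x - y) <= nrm x + nrm y.
Proof. by rewrite -(nrmN y) nrmD. Qed.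

Lemma nrmZ k (x : ch) : nrm (k *: x) = `|k| * nrm x.
Proof.
rewrite (nrm_sub (D:=k *: x) (uniq_dom x)); last exact: domZ_subset.
rewrite /nrm mulr_sumr; apply: eq_bigr => z _; by rewrite coeffZ normrM.
Qed.

Lemma nrm_gen (z : K) : nrm << z >> = 1.
Proof. by rewrite /nrm domU1 big_seq1 coeffU eqxx mulr1 normr1. Qed.

Lemma nrm_sum I (r : seq I) (F : I -> ch) :
  nrm (\sum_(i <- r) F i) <= \sum_(i <- r) nrm (F i).
Proof.
elim: r => [|i r IH]; first by rewrite !big_nil nrm0.
rewrite !big_cons; apply: le_trans (nrmD _ _) _; by rewrite lerD2l.
Qed.

Lemma nrm_fglift (f : K -> ch) (D : ch) :
  nrm (fglift f D) <= \sum_(z <- dom D) `|coeff z D| * nrm (f z).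
Proof.
rewrite fgliftE; apply: le_trans (nrm_sum _ _) _.
by apply: ler_sum => z _; rewrite nrmZ.
Qed.

End FG.


Section Simp.
Local Open Scope fset_scope.
Variables (K : mcdata) (R : realType).
Hypothesis HK : is_multicomplex K.
Local Notation V := (mc_V K).
Local Notation S := (mc_S K).
Local Notation ch := (chain K R).
Implicit Types (s : S) (A B W : {fset V}) (w y z : seq V) (v : V).

Definition sset (w : seq V) : {fset V} := [fset x | x in w].
Definition mk (s : S) (w : seq V) : asimp K := (face s (sset w), w).
Definition io (s : S) (y : seq V) : ch := gen R (mk s y).

Lemma in_sset (x : V) w : (x \in sset w) = (x \in w).
Proof. by rewrite inE. Qed.

Lemma sset_ne (w : seq V) : w != [::] -> sset w != fset0.
Proof.
case: w => [|a w] //= _; apply/fset0Pn; exists a; by rewrite in_sset mem_head.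
Qed.

Lemma ax_fv (s : S) W : W `<=` vset s -> W != fset0 -> vset (face s W) = W.
Proof. by case: HK => _ [H _]; apply: H. Qed.
Lemma ax_fid (s : S) : face s (vset s) = s.
Proof. by case: HK => _ [_ [H _]]; apply: H. Qed.
Lemma ax_ff (s : S) W W' : W' `<=` W -> W `<=` vset s -> W' != fset0 ->
      face (face s W) W' = face s W'.
Proof. by case: HK => _ [_ [_ [H _]]]; apply: H. Qed.

Lemma sset_del (w : seq V) i : sset (take i w ++ drop i.+1 w) `<=` sset w.
Proof.
apply/fsubsetP => x; rewrite !in_sset mem_cat => /orP[/mem_take|/mem_drop] //.
Qed.

Lemma del_ne (w : seq V) i : (1 < size w)%N -> take i w ++ drop i.+1 w != [::].
Proof.
move=> sw; rewrite -size_eq0 size_cat size_take size_drop.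
move: sw; move: (size w) => n sw; case: ltnP => hi; apply/eqP; lia.
Qed.

Lemma aface_mk s w i : sset w `<=` vset s -> (1 < size w)%N ->
  aface i (mk s w) = mk s (take i w ++ drop i.+1 w).
Proof.
move=> sub sw; rewrite /aface /mk /=.
have wne : w != [::] by apply/eqP => E; move: sw; rewrite E.
rewrite ax_fv // ?sset_ne //.
case: eqP => [<-|_] //.
by rewrite ax_ff ?sset_del ?sset_ne ?del_ne.
Qed.

Lemma bd_simp_mk s w : sset w `<=` vset s -> (1 < size w)%N ->
  bd_simp R (mk s w) = Dd (io s) w.
Proof.
move=> sub sw; rewrite /bd_simp /= leqNgt sw /= Dd_sum.
by apply: eq_bigr => i _; rewrite aface_mk.
Qed.

Lemma bd_gen (x : asimp K) : bd (gen R x) = bd_simp R x.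
Proof. by rewrite /bd /gen liftU scale1r. Qed.

Lemma bdB (x y : ch) : bd (x - y) = (bd x - bd y)%R.
Proof. exact: fgliftB. Qed.

Lemma bd_io s w : sset w `<=` vset s -> (1 < size w)%N -> bd (io s w) = Dd (io s) w.
Proof. by move=> sub sw; rewrite /io bd_gen bd_simp_mk. Qed.

Lemma mk_face s W w : W `<=` vset s -> sset w `<=` W -> w != [::] ->
  mk (face s W) w = mk s w.
Proof. by move=> sW swW wn; rewrite /mk ax_ff ?sset_ne. Qed.

Lemma is_asimp_mk s w : sset w `<=` vset s -> w != [::] ->
  is_asimp (size w).-1 (mk s w).
Proof.
move=> sub wn; rewrite /is_asimp /= prednK ?lt0n ?size_eq0 // eqxx /=.
by rewrite ax_fv ?sset_ne.
Qed.


Variables (Fv : V * bool -> V) (Fs : mc_S (prism K) -> S).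
Hypothesis Hsm : @is_smap (prism K) K Fv Fs.

Definition pS (s : S) (A B : {fset V}) : mc_S (prism K) :=
  insubd (incl_s true s) (s, A, B).

Definition PV (A B : {fset V}) : {fset V * bool} :=
  [fset (v, false) | v in A] `|` [fset (v, true) | v in B].

Lemma inPV A B v (b : bool) :
  ((v, b) \in PV A B) = (if b then v \in B else v \in A).
Proof.
rewrite /PV in_fsetU; case: b.
  apply/orP/idP => [[/imfsetP [u _ //] | /imfsetP [u /= uB [->]] //] | vB].
  by right; apply/imfsetP; exists v.
apply/orP/idP => [[/imfsetP [u /= uB [->]] //| /imfsetP [u _ //]] | vB].
by left; apply/imfsetP; exists v.
Qed.

Lemma val_pS s A B : prism_ok (s, A, B) -> val (pS s A B) = (s, A, B).
Proof. by move=> ok; rewrite /pS insubdK. Qed.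

Lemma vset_Fs s A B : prism_ok (s, A, B) ->
  vset (Fs (pS s A B)) = [fset Fv p | p in PV A B].
Proof.
move=> ok; case: Hsm => H1 _; rewrite H1 /=.
by rewrite /prism_vset val_pS.
Qed.

Lemma PVS A B (A' B' : {fset V}) : A' `<=` A -> B' `<=` B -> PV A' B' `<=` PV A B.
Proof.
move=> /fsubsetP sA /fsubsetP sB; apply/fsubsetP => [[v b]].
by rewrite !inPV; case: b; [apply: sB | apply: sA].
Qed.

Lemma prism_ok_face s A B (A' B' : {fset V}) : prism_ok (s, A, B) ->
  A' `<=` A -> B' `<=` B -> A' `|` B' != fset0 ->
  prism_ok (face s (A' `|` B'), A', B').
Proof.
rewrite /prism_ok /= => /andP[/eqP E c1] sA sB ne.
have sub : A' `|` B' `<=` vset s by rewrite -E fsetUSS.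
rewrite ax_fv // eqxx /=.
apply: leq_trans c1; apply: fsubset_leq_card.
by apply: fsetISS.
Qed.

Lemma CL s A B (A' B' : {fset V}) : prism_ok (s, A, B) ->
  A' `<=` A -> B' `<=` B -> A' `|` B' != fset0 ->
  Fs (pS (face s (A' `|` B')) A' B') = face (Fs (pS s A B)) [fset Fv p | p in PV A' B'].
Proof.
move=> ok sA sB ne; case: Hsm => _ H2.
have sub : PV A' B' `<=` vset (pS s A B).
  by rewrite /= /prism_vset val_pS // PVS.
have neW : PV A' B' != fset0.
  move: ne => /fset0Pn [v]; rewrite in_fsetU => /orP[vA|vB]; apply/fset0Pn.
    by exists (v, false); rewrite inPV.
  by exists (v, true); rewrite inPV.
rewrite -(H2 _ _ sub neW); congr Fs.
rewrite /= /prism_face.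
have EA : [fset p.1 | p in PV A' B' & ~~ p.2] = A'.
  apply/fsetP => v; apply/imfsetP/idP => [[[u b]] /= /andP[]|vA].
    by case: b => //; rewrite inPV => uA _ ->.
  by exists (v, false) => //; rewrite !inE /= andbT -in_fsetU -/(PV A' B') inPV vA.
have EB : [fset p.1 | p in PV A' B' & p.2] = B'.
  apply/fsetP => v; apply/imfsetP/idP => [[[u b]] /= /andP[]|vB].
    by case: b => //; rewrite inPV => uB _ ->.
  by exists (v, true) => //; rewrite !inE /= andbT -in_fsetU -/(PV A' B') inPV vB.
rewrite EA EB val_pS //; apply: val_inj.
have ok2 := prism_ok_face ok sA sB ne.
by rewrite val_pS // insubdK.
Qed.

Lemma card_le1 (X : {fset V}) :
  (forall x y : V, x \in X -> y \in X -> x = y) -> (#|` X| <= 1)%N.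
Proof.
move=> H; case: (fset_0Vmem X) => [->|[x xX]]; first by rewrite cardfs0.
rewrite -(cardfs1 x); apply: fsubset_leq_card; apply/fsubsetP => y yX.
by rewrite inE (H _ _ yX xX).
Qed.

Lemma im_sub (P Q : {fset V * bool}) : P `<=` Q ->
  [fset Fv p | p in P] `<=` [fset Fv p | p in Q].
Proof.
move=> /fsubsetP PQ; apply/fsubsetP => x /imfsetP [p pP ->].
by apply/imfsetP; exists p => //; apply: PQ.
Qed.

Lemma ax_ne s : vset s != fset0.
Proof. by case: HK. Qed.

Lemma CLio s A B (A' B' : {fset V}) z : prism_ok (s, A, B) ->
  A' `<=` A -> B' `<=` B -> A' `|` B' != fset0 ->
  all (fun x => x \in [fset Fv p | p in PV A' B']) z -> z != [::] ->
  io (Fs (pS (face s (A' `|` B')) A' B')) z = io (Fs (pS s A B)) z.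
Proof.
move=> ok sA sB ne /allP Z zn; rewrite (CL ok) // /io mk_face //.
  by rewrite vset_Fs // im_sub // PVS.
by apply/fsubsetP => x; rewrite in_sset => /Z.
Qed.

Lemma is_chain0 n : is_chain n (0 : ch).
Proof. by rewrite /is_chain dom0. Qed.

Lemma is_chainD n (x y : ch) : is_chain n x -> is_chain n y -> is_chain n (x + y)%R.
Proof.
move=> /allP hx /allP hy; apply/allP => t /domD_subset; rewrite mem_cat.
by case/orP => [/hx|/hy].
Qed.

Lemma is_chainB n (x y : ch) : is_chain n x -> is_chain n y -> is_chain n (x - y)%R.
Proof.
move=> /allP hx /allP hy; apply/allP => t /domB; rewrite mem_cat.
by case/orP => [/hx|/hy].
Qed.

Lemma is_chainN n (x : ch) : is_chain n x -> is_chain n (- x)%R.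
Proof. by move=> h; rewrite -sub0r; apply: is_chainB => //; apply: is_chain0. Qed.

Lemma is_chainZ n k (x : ch) : is_chain n x -> is_chain n (k *: x)%R.
Proof. by move=> /allP hx; apply/allP => t /domZ_subset /hx. Qed.

Lemma is_chain_sumo n m (F : 'I_m -> ch) :
  (forall j, is_chain n (F j)) -> is_chain n (\sum_(j < m) F j)%R.
Proof.
move=> h; apply: (big_ind (fun x => is_chain n x)) => //; first exact: is_chain0.
exact: is_chainD.
Qed.

Lemma is_chain_fglift (n : nat) (f : asimp K -> ch) (D : ch) :
  (forall t, t \in dom D -> is_chain n (f t)) -> is_chain n (fglift f D).
Proof.
move=> h; rewrite fgliftE big_seq.
apply: (big_ind (fun x => is_chain n x)) => //; first exact: is_chain0.
  exact: is_chainD.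
by move=> t tD; apply: is_chainZ; apply: h.
Qed.

Lemma is_chain_io n s y : sset y `<=` vset s -> size y = n.+1 -> is_chain n (io s y).
Proof.
move=> sub sy; rewrite /is_chain /io /gen domU1 /= andbT.
have yn : y != [::] by rewrite -size_eq0 sy.
by have := is_asimp_mk sub yn; rewrite sy.
Qed.

Section Hom.
Variable (r : V -> nat).

Definition Aj s a := [fset v in vset s | (r v < a)%N].
Definition Bj s b := [fset v in vset s | (b <= r v)%N].
Definition hv j v := Fv (v, (j <= r v)%N).
Definition Ec j s := Fs (pS s (Aj s j) (Bj s j)).
Definition Cc j s := Fs (pS s (Aj s j.+1) (Bj s j)).
Definition hm j (sg : asimp K) : ch := io (Ec j sg.1) (map (hv j) sg.2).
Definition PrC j (sg : asimp K) : ch :=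
  Pr (io (Cc j sg.1)) (map (hv j.+1) sg.2) (map (hv j) sg.2).
Definition PrE j (sg : asimp K) : ch :=
  Pr (io (Ec j sg.1)) (map (hv j) sg.2) (map (hv j) sg.2).
Definition Tg j (sg : asimp K) : ch := PrC j sg - PrE j sg.

Lemma AjS s a : Aj s a `<=` vset s.
Proof. by apply/fsubsetP => v; rewrite !inE => /andP[]. Qed.
Lemma BjS s a : Bj s a `<=` vset s.
Proof. by apply/fsubsetP => v; rewrite !inE => /andP[]. Qed.

Lemma AjBj_U s a b : (b <= a)%N -> Aj s a `|` Bj s b = vset s.
Proof.
move=> ba; apply/fsetP => v; rewrite in_fsetU !inE.
case: (v \in vset s) => //=; case: (ltnP (r v) a) => //= h.
by rewrite (leq_trans ba h).
Qed.

Lemma okAB s a b : (b <= a <= b.+1)%N -> {in vset s &, injective r} ->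
  prism_ok (s, Aj s a, Bj s b).
Proof.
move=> /andP[ba ab] inj; rewrite /prism_ok /= AjBj_U // eqxx /=.
apply: card_le1 => x y; rewrite !inE => /andP[/andP[xs xa] /andP[_ xb]].
move=> /andP[/andP[ys ya] /andP[_ yb]].
apply: inj => //; apply/eqP; rewrite eqn_leq.
move: xa xb ya yb ab; move: (r x) (r y) => p q; lia.
Qed.

Lemma hv_in s a b k v : v \in vset s -> (b <= k <= a)%N ->
  hv k v \in [fset Fv p | p in PV (Aj s a) (Bj s b)].
Proof.
move=> vs /andP[bk ka]; apply/imfsetP; exists (v, (k <= r v)%N) => //.
rewrite inPV; case: (leqP k (r v)) => h; rewrite !inE vs /=.
  exact: leq_trans bk h.
exact: leq_trans h ka.
Qed.

Lemma all_hv s a b k w : sset w `<=` vset s -> (b <= k <= a)%N ->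
  all (fun x => x \in [fset Fv p | p in PV (Aj s a) (Bj s b)]) (map (hv k) w).
Proof.
move=> /fsubsetP sub bka; apply/allP => x /mapP [v vw ->].
by apply: hv_in => //; apply: sub; rewrite in_sset.
Qed.

Lemma Aj_face s Y a : Y `<=` vset s -> Y != fset0 ->
  Aj (face s Y) a = [fset v in Y | (r v < a)%N].
Proof. by move=> sub ne; rewrite /Aj ax_fv. Qed.
Lemma Bj_face s Y a : Y `<=` vset s -> Y != fset0 ->
  Bj (face s Y) a = [fset v in Y | (a <= r v)%N].
Proof. by move=> sub ne; rewrite /Bj ax_fv. Qed.

Lemma CLio_face s Y a b z : prism_ok (s, Aj s a, Bj s b) -> (b <= a)%N ->
  Y `<=` vset s -> Y != fset0 ->
  all (fun x => x \in [fset Fv p | p in PV (Aj (face s Y) a) (Bj (face s Y) b)]) z ->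
  z != [::] ->
  io (Fs (pS (face s Y) (Aj (face s Y) a) (Bj (face s Y) b))) z =
  io (Fs (pS s (Aj s a) (Bj s b))) z.
Proof.
move=> ok ba sub ne Z zn.
have U : Aj (face s Y) a `|` Bj (face s Y) b = Y by rewrite AjBj_U // ax_fv.
have sA : Aj (face s Y) a `<=` Aj s a.
  rewrite Aj_face //; apply/fsubsetP => v; rewrite !inE => /andP[vY ->].
  by rewrite (fsubsetP sub _ vY).
have sB : Bj (face s Y) b `<=` Bj s b.
  rewrite Bj_face //; apply/fsubsetP => v; rewrite !inE => /andP[vY ->].
  by rewrite (fsubsetP sub _ vY).
rewrite -[in pS (face s Y)]U (CLio ok) //; by rewrite U.
Qed.

Lemma CLio_sub s a b a' b' z : prism_ok (s, Aj s a, Bj s b) -> (b' <= a')%N ->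
  (a' <= a)%N -> (b <= b')%N ->
  all (fun x => x \in [fset Fv p | p in PV (Aj s a') (Bj s b')]) z ->
  z != [::] ->
  io (Fs (pS s (Aj s a') (Bj s b'))) z = io (Fs (pS s (Aj s a) (Bj s b))) z.
Proof.
move=> ok ba aa bb Z zn.
have U : Aj s a' `|` Bj s b' = vset s by rewrite AjBj_U.
have sA : Aj s a' `<=` Aj s a.
  apply/fsubsetP => v; rewrite !inE => /andP[-> h] /=; exact: leq_trans h aa.
have sB : Bj s b' `<=` Bj s b.
  apply/fsubsetP => v; rewrite !inE => /andP[-> h] /=; exact: leq_trans bb h.
rewrite -{1}(ax_fid s) -[in face s (vset s)]U (CLio ok) // U; exact: ax_ne.
Qed.

Definition good (sg : asimp K) :=
  [/\ sset sg.2 = vset sg.1, sg.2 != [::] & {in vset sg.1 &, injective r}].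

Lemma bdPr s a b k k' w : prism_ok (s, Aj s a, Bj s b) -> sset w `<=` vset s ->
  w != [::] -> (b <= k <= a)%N -> (b <= k' <= a)%N ->
  bd (Pr (io (Fs (pS s (Aj s a) (Bj s b)))) (map (hv k') w) (map (hv k) w)) =
  Pr (Dd (io (Fs (pS s (Aj s a) (Bj s b))))) (map (hv k') w) (map (hv k) w).
Proof.
move=> ok sub wn hk hk'.
rewrite (Pr_morph (L := @bd K R)); last by move=> x y; exact: fgliftB.
apply: (Pr_eq_in (X := fun x => x \in [fset Fv p | p in PV (Aj s a) (Bj s b)])).
- by rewrite !size_map.
- exact: all_hv.
- exact: all_hv.
move=> y Sy /allP Y; apply: bd_io.
  by rewrite vset_Fs //; apply/fsubsetP => x; rewrite in_sset => /Y.
by rewrite Sy size_map ltnS lt0n size_eq0.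
Qed.

Lemma face_Pr s Y y a b k k' :
  prism_ok (s, Aj s a, Bj s b) -> (b <= a)%N -> Y `<=` vset s -> Y != fset0 ->
  sset y `<=` Y -> (b <= k <= a)%N -> (b <= k' <= a)%N ->
  Pr (io (Fs (pS (face s Y) (Aj (face s Y) a) (Bj (face s Y) b)))) (map (hv k') y) (map (hv k) y) =
  Pr (io (Fs (pS s (Aj s a) (Bj s b)))) (map (hv k') y) (map (hv k) y).
Proof.
move=> ok ba sub ne syY hk hk'.
have sy' : sset y `<=` vset (face s Y) by rewrite ax_fv.
apply: (Pr_eq_in (X := fun x => x \in [fset Fv p | p in PV (Aj (face s Y) a) (Bj (face s Y) b)])).
- by rewrite !size_map.
- exact: all_hv.
- exact: all_hv.
move=> z Sz Z; apply: CLio_face => //.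
by rewrite -size_eq0 Sz.
Qed.

Lemma fglift_bd j (sg : asimp K) : good sg ->
  fglift (Tg j) (bd_simp R sg) = Dd (fun y => PrC j (sg.1, y) - PrE j (sg.1, y)) sg.2.
Proof.
case: sg => s w [/= Ew wn inj].
have okC : prism_ok (s, Aj s j.+1, Bj s j) by apply: okAB; rewrite ?leqnn ?leqnSn.
have okE : prism_ok (s, Aj s j, Bj s j) by apply: okAB; rewrite ?leqnn ?leqnSn.
case: (ltnP 1 (size w)) => sw; last first.
  case: w Ew wn sw => [|x [|x2 w]] //= _ _ _.
  by rewrite /bd_simp /= fglift0 /PrC /PrE /= !subr0.
have -> : (s, w) = mk s w by rewrite /mk Ew ax_fid.
rewrite bd_simp_mk ?Ew //.
rewrite (Dd_morph (L := fglift (Tg j))); last by move=> x y; exact: fgliftB.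
apply: (Dd_eq_in (X := fun x => x \in vset s)).
  by apply/allP => x xw; rewrite -Ew in_sset.
move=> y Sy /allP Y.
have yn : y != [::] by rewrite -size_eq0 -eqSS Sy; case: (size w) sw => [|[|]].
have sub : sset y `<=` vset s by apply/fsubsetP => x; rewrite in_sset => /Y.
rewrite /io /gen liftU scale1r /Tg /PrC /PrE /=.
congr (_ - _).
  by apply: face_Pr; rewrite ?sset_ne ?leqnSn ?leqnn.
by apply: face_Pr; rewrite ?sset_ne ?leqnSn ?leqnn.
Qed.

Lemma KJ j (sg : asimp K) : good sg ->
  (bd (Tg j sg) + fglift (Tg j) (bd_simp R sg) = hm j sg - hm j.+1 sg)%R.
Proof.
move=> G; rewrite fglift_bd //; case: sg G => s w [/= Ew wn inj].
have okC : prism_ok (s, Aj s j.+1, Bj s j) by apply: okAB; rewrite ?leqnn ?leqnSn.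
have okE : prism_ok (s, Aj s j, Bj s j) by apply: okAB; rewrite ?leqnn ?leqnSn.
have sw : sset w `<=` vset s by rewrite Ew.
rewrite /Tg bdB Dd_B /PrC /PrE /hm /Cc /Ec /=.
rewrite (bdPr okC) ?leqnn ?leqnSn // (bdPr okE) ?leqnn ?leqnSn //.
rewrite addrACA -opprD !prism_identity subrr subr0.
rewrite (CLio_sub (a' := j) (b' := j) (z := map (hv j) w) okC) ?leqnn ?leqnSn //;
  last by rewrite -size_eq0 size_map size_eq0.
  2: by apply: all_hv; rewrite ?leqnn.
rewrite (CLio_sub (a' := j.+1) (b' := j.+1) (z := map (hv j.+1) w) okC) ?leqnn ?leqnSn //.
  by apply: all_hv; rewrite ?leqnn.
by rewrite -size_eq0 size_map size_eq0.
Qed.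

Definition Hg m (sg : asimp K) : ch := (\sum_(j < m) Tg j sg)%R.

Lemma Hsum m (sg : asimp K) : good sg ->
  (bd (Hg m sg) + fglift (Hg m) (bd_simp R sg) = hm 0 sg - hm m sg)%R.
Proof.
move=> G; rewrite /Hg /bd raddf_sum /= fglift_funsum -big_split /=.
under eq_bigr do rewrite KJ //.
elim: m => [|m IH]; first by rewrite big_ord0 subrr.
by rewrite big_ord_recr /= IH addrA subrK.
Qed.

Lemma Tg0 j s w : j \notin map r w -> sset w = vset s -> Tg j (s, w) = 0%R.
Proof.
move=> jn Ew.
have rne v : v \in vset s -> r v != j.
  rewrite -Ew in_sset => vw; apply: contraNneq jn => <-; exact: map_f.
have EA : Aj s j.+1 = Aj s j.
  apply/fsetP => v; rewrite !inE; case vs: (v \in vset s) => //=.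
  by rewrite ltnS leq_eqVlt (negbTE (rne v vs)).
have Em : map (hv j.+1) w = map (hv j) w.
  apply/eq_in_map => v vw; rewrite /hv.
  have vs : v \in vset s by rewrite -Ew in_sset.
  by rewrite [(j <= r v)%N]leq_eqVlt eq_sym (negbTE (rne v vs)).
by rewrite /Tg /PrC /PrE /Cc /= EA Em subrr.
Qed.

Lemma nrm_Tg j (sg : asimp K) : nrm (Tg j sg) <= (size sg.2 + size sg.2)%:R.
Proof.
rewrite /Tg natrD; apply: le_trans (nrmB _ _) _; apply: lerD.
  rewrite /PrC; rewrite -(size_map (hv j.+1)).
  apply: (Pr_norm (X := predT)) => //; first exact: nrm0.
  - by move=> ? ?; apply: nrmB.
  - by rewrite !size_map.
  - by apply/allP.
  - by apply/allP.
  by move=> y _ _; rewrite nrm_gen.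
rewrite /PrE; rewrite -(size_map (hv j)).
apply: (Pr_norm (X := predT)) => //; first exact: nrm0.
- by move=> ? ?; apply: nrmB.
- by apply/allP.
- by apply/allP.
by move=> y _ _; rewrite nrm_gen.
Qed.

Lemma count_ord (m : nat) (t : seq nat) :
  (\sum_(j < m) ((val j \in t) : nat)%:R : R) <= (size t)%:R.
Proof.
rewrite -natr_sum ler_nat.
rewrite (eq_bigr (fun j : 'I_m => if val j \in t then 1 else 0)%N); last by move=> j _; case: (_ \in _).
rewrite -big_mkcond sum1_card cardE.
rewrite -(size_map val); apply: uniq_leq_size.
  by rewrite map_inj_uniq ?enum_uniq //; apply: val_inj.
by move=> x /mapP [j]; rewrite mem_enum => jt ->.
Qed.

Lemma nrm_Hg m s w : good (s, w) ->
  nrm (Hg m (s, w)) <= (size w)%:R * (size w + size w)%:R.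
Proof.
case=> /= Ew wn inj.
rewrite /Hg; apply: le_trans (nrm_sum _ _) _.
apply: (@le_trans _ _ (\sum_(j < m) ((val j \in map r w) : nat)%:R * (size w + size w)%:R)%R).
  apply: ler_sum => j _; case: (boolP (val j \in map r w)) => jw.
    by rewrite mul1r; apply: (nrm_Tg j (s, w)).
  by rewrite Tg0 // nrm0 mul0r.
rewrite -mulr_suml ler_wpM2r //.
by rewrite -(size_map r); apply: count_ord.
Qed.

Lemma is_chain_Pr n s a b k k' w : prism_ok (s, Aj s a, Bj s b) ->
  sset w `<=` vset s -> size w = n.+1 -> (b <= k <= a)%N -> (b <= k' <= a)%N ->
  is_chain n.+1 (Pr (io (Fs (pS s (Aj s a) (Bj s b)))) (map (hv k') w) (map (hv k) w)).
Proof.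
move=> ok sub sw hk hk'.
apply: (Pr_ind (P := fun x => is_chain n.+1 x)
   (X := fun x => x \in [fset Fv p | p in PV (Aj s a) (Bj s b)])).
- exact: is_chain0.
- by move=> ? ?; apply: is_chainB.
- by rewrite !size_map.
- exact: all_hv.
- exact: all_hv.
move=> y Sy /allP Y; apply: is_chain_io.
  by rewrite vset_Fs //; apply/fsubsetP => x; rewrite in_sset => /Y.
by rewrite Sy size_map sw.
Qed.

End Hom.

Section G.
Variables (fv0 : V -> V) (fs0 : S -> S).
Hypotheses (H0v : Fv \o incl_v false =1 fv0) (H0s : Fs \o incl_s false =1 fs0)
  (H1v : Fv \o incl_v true =1 id) (H1s : Fs \o incl_s true =1 id).

Lemma hm0 r s w : good r (s, w) -> hm r 0 (s, w) = gen R (s, w).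
Proof.
case=> /= Ew wn _.
have EA : Aj r s 0 = fset0 by apply/fsetP => v; rewrite !inE ltn0 andbF.
have EB : Bj r s 0 = vset s by apply/fsetP => v; rewrite !inE andbT.
have Ep : pS s fset0 (vset s) = incl_s true s.
  by apply: val_inj; rewrite val_pS //; exact: prism_ok1.
rewrite /hm /Ec /= EA EB Ep; have := H1s s => /= ->.
have -> : map (hv r 0) w = w.
  by rewrite -[RHS]map_id; apply/eq_map => v; rewrite /hv leq0n; exact: H1v.
by rewrite /io /mk Ew ax_fid.
Qed.

Lemma hmm r m s w : good r (s, w) -> (forall v, v \in vset s -> (r v < m)%N) ->
  hm r m (s, w) = gen R (fs0 s, map fv0 w).
Proof.
case=> /= Ew wn _ rm.
have EA : Aj r s m = vset s by apply/fsetP => v; rewrite !inE; case vs: (v \in vset s) => //=; rewrite rm.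
have EB : Bj r s m = fset0.
  apply/fsetP => v; rewrite !inE; case vs: (v \in vset s) => //=.
  by rewrite leqNgt rm.
have Ep : pS s (vset s) fset0 = incl_s false s.
  by apply: val_inj; rewrite val_pS //; exact: prism_ok0.
rewrite /hm /Ec /= EA EB Ep; have := H0s s => /= ->.
have -> : map (hv r m) w = map fv0 w.
  apply/eq_in_map => v vw; rewrite /hv.
  have vs : v \in vset s by rewrite -Ew in_sset.
  by rewrite leqNgt rm //; exact: H0v.
rewrite /io /mk; have -> : sset (map fv0 w) = vset (fs0 s).
  rewrite -(H0s s) /=; case: Hsm => H1 _; rewrite H1.
  rewrite (_ : vset (m := prism K) _ = PV (vset s) fset0); last by [].
  apply/fsetP => x; rewrite in_sset; apply/mapP/imfsetP.
    move=> [v vw ->]; exists (v, false); first by rewrite /= inPV -Ew in_sset.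
    by rewrite -(H0v v).
  move=> [[v b]] /=; rewrite inPV; case: b => //.
  rewrite -Ew in_sset => vw ->; exists v => //; by rewrite -(H0v v).
by rewrite ax_fid.
Qed.

Lemma main_g n (c : ch) : is_chain n c -> bd c = 0%R ->
  exists b : ch, [/\ is_chain n.+1 b, (chain_map fv0 fs0 c - c = bd b)%R &
     nrm b <= ((n.+1)%:R * (n.+1 + n.+1)%:R) * nrm c].
Proof.
move=> cc bc0.
pose Us := flatten [seq sg.2 | sg <- dom c].
pose r v := index v Us; pose m := size Us.
have Gd : forall sg, sg \in dom c ->
    [/\ good r sg, size sg.2 = n.+1 & forall v, v \in vset sg.1 -> (r v < m)%N].
  move=> sg sgc; have := allP cc _ sgc; rewrite /is_asimp => /andP[/eqP sz /eqP E].
  have inU : forall v, v \in vset sg.1 -> v \in Us.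
    move=> v; rewrite -E => /imfsetP [x /= xw ->].
    by apply/flattenP; exists sg.2 => //; apply: map_f.
  split => //; last by move=> v /inU; rewrite /r /m index_mem.
  split => //; first by rewrite -size_eq0 sz.
  by move=> x y /inU xs /inU ys; apply: (@index_inj _ x).
exists (- fglift (Hg r m) c)%R; split.
- apply: is_chainN; apply: is_chain_fglift => -[s w] /Gd [G sz _].
  apply: is_chain_sumo => j; case: G => /= Ew wn inj.
  apply: is_chainB.
    apply: is_chain_Pr; rewrite ?Ew ?leqnn ?leqnSn //.
    by apply: okAB; rewrite ?leqnn ?leqnSn.
  apply: is_chain_Pr; rewrite ?Ew ?leqnn ?leqnSn //.
  by apply: okAB; rewrite ?leqnn ?leqnSn.
- rewrite /bd raddfN /= fglift_comp.
  rewrite (@fglift_ext _ _ _ _ (fun z : asimp K => gen R z - gen R (fs0 z.1, map fv0 z.2)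
        - fglift (Hg r m) (bd_simp R z))%R); last first.
    move=> [s w] /Gd [G sz rm]; apply/eqP; rewrite -(hm0 G) -(hmm G rm).
    by rewrite -(Hsum m G) addrK.
  rewrite !fglift_funB fglift_gen -fglift_comp.
  by rewrite -/(bd c) bc0 fglift0 subr0 opprB.
rewrite nrmN; apply: le_trans (nrm_fglift _ _) _.
rewrite /nrm mulr_sumr !big_seq; apply: ler_sum => -[s w] /Gd [G sz _].
rewrite mulrC ler_wpM2r //.
by have := nrm_Hg m G; rewrite sz.
Qed.

End G.

End Simp.

Unset Implicit Arguments.
Theorem lemma3p2 (R : realType) (n : nat) :
  exists Kn : R,
  forall (K : mcdata) (G : groupType)
         (av : G -> mc_V K -> mc_V K) (as_ : G -> mc_S K -> mc_S K),
    is_multicomplex K ->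
    is_saction av as_ ->
    (forall g : G, simp_homotopic_to_id (av g) (as_ g)) ->
    forall c : chain K R, is_chain n c -> bd c = 0 ->
    forall (mu : G -> R) (s : seq G), fin_prob mu s ->
    exists b : chain K R,
      [/\ is_chain n.+1 b,
          diffusion av as_ mu s c - c = bd b &
          l1norm b <= Kn * l1norm c].
Proof.
set Kn : R := (n.+1)%:R * (n.+1 + n.+1)%:R.
exists Kn => K G av as_ HK _ Hh c cc bc0 mu s [_ _ mu0 mu1].
have per : forall g, exists b : chain K R, [/\ is_chain n.+1 b,
    chain_map (av g) (as_ g) c - c = bd b & nrm b <= Kn * nrm c].
  move=> g; case: (Hh g) => Fv [Fs [Hsm H0v H0s H1v H1s]].
  exact: (main_g HK Hsm H0v H0s H1v H1s cc bc0).
have ind : forall t : seq G, exists b : chain K R, [/\ is_chain n.+1 b,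
    \sum_(g <- t) mu g *: (chain_map (av g) (as_ g) c - c) = bd b &
    nrm b <= (\sum_(g <- t) mu g) * (Kn * nrm c)].
  elim=> [|g t [b [cb eb nb]]].
    exists 0; split; first exact: is_chain0.
      by rewrite big_nil /bd fglift0.
    by rewrite nrm0 big_nil mul0r.
  case: (per g) => bg [cg eg ng].
  exists (mu g *: bg + b); split.
  - by apply: is_chainD => //; apply: is_chainZ.
  - by rewrite big_cons /bd fgliftD fgliftZ -/(bd bg) -/(bd b) -eg -eb.
  apply: le_trans (nrmD _ _) _; rewrite nrmZ big_cons mulrDl lerD //.
  by rewrite ger0_norm // ler_wpM2l.
have [b [cb eb nb]] := ind s.
exists b; split => //.
  rewrite -eb /diffusion; symmetry.
  under eq_bigr do rewrite scalerBr.
  by rewrite sumrB -scaler_suml mu1 scale1r.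
by move: nb; rewrite mu1 mul1r.
Qed.
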